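(* Let $s\ge 1$ and let $a_1,\dots,a_k$ be pairwise coprime positive integers and $d_1,\dots,d_k$ positive integers with $k\le s$ and $a_i,d_i\le 2^s$, such that the minimal polynomial over $\mathbb{Q}$ of the positive real number $\sqrt[d_i]{a_i}$ is $x^{d_i}-a_i$ for each $i$. Let $d=\operatorname{lcm}(d_1,\dots,d_k)$, $\zeta_d=e^{2\pi i/d}$, $K=\mathbb{Q}(\sqrt[d_1]{a_1},\dots,\sqrt[d_k]{a_k},\zeta_d)$. Then there exist integers $c_0,c_1,\dots,c_k$ with $|c_i|\le 2^{4s^2}$ such that $$\theta=c_0\zeta_d+\sum_{i=1}^k c_i\sqrt[d_i]{a_i}$$ is a primitive element of $K$, i.e. $K=\mathbb{Q}(\theta)$, and $\deg\theta\le 2^{2s^2}$.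
   Context: $\deg\theta$ is the degree of the minimal polynomial of $\theta$ over $\mathbb{Q}$. *)

(* Defs.v *)
From HB Require Import structures.
From mathcomp Require Import all_boot all_order all_algebra all_field.
Set Implicit Arguments. Unset Strict Implicit. Unset Printing Implicit Defensive.
Import Order.TTheory GRing.Theory Num.Theory.
Local Open Scope ring_scope.

(* We work inside algC, the algebraic closure of Q embedded in C, which
   contains every number field considered in the statement. *)

(* zeta_d = exp(2 pi i / d).  In algC, d.-root (-1) is the d-th root of -1 of
   minimal nonnegative argument, i.e. exp(i pi / d); its square is exp(2 pi i/d). *)
Definition zeta (d : nat) : algC := (d.-root (-1)) ^+ 2.

(* Q(S): the subfield of algC generated over Q by the elements of S,
   i.e. the intersection of all subfields of algC containing S
   (every subfield of algC contains Q). *)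
Definition in_Qgen (S : seq algC) (x : algC) : Prop :=
  forall F : {pred algC}, divring_closed F -> {subset S <= F} -> x \in F.

Definition Qgen_eq (S1 S2 : seq algC) : Prop :=
  forall x, in_Qgen S1 x <-> in_Qgen S2 x.

Definition degQ (x : algC) : nat := (size (minCpoly x)).-1.

(* Main.v *)
Require Import Defs.
From HB Require Import structures.
From mathcomp Require Import all_boot all_order all_algebra all_field.
Import Order.TTheory GRing.Theory Num.Theory.
Local Open Scope ring_scope.
From mathcomp Require Import zify.
Set Implicit Arguments. Unset Strict Implicit. Unset Printing Implicit Defensive.
Local Notation pQtoC := (map_poly (ratr : rat -> algC)).


Lemma split_field_exists (s : seq algC) :
  {Qr : fieldExtType rat & {QrC : {rmorphism Qr -> algC} &
   {pr : {poly Qr} | pr \is a polyOver 1%VS /\ splittingFieldFor 1 pr fullv &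
     forall x, x \in s -> exists xx, QrC xx = x /\ root pr xx}}}.
Proof.
pose p := \prod_(x <- s) sval (minCpolyP x).
have Dp : pQtoC p = \prod_(x <- s) minCpoly x.
  rewrite rmorph_prod; apply: eq_bigr => x _.
  by case: (minCpolyP x) => q [Dq _] _ /=; rewrite Dq.
have monp : pQtoC p \is monic by rewrite Dp monic_prod // => x _; apply: minCpoly_monic.
have [r Dr] := closed_field_poly_normal (pQtoC p : {poly algC}).
rewrite (monicP monp) scale1r in Dr.
have [Qr [QrC [rr Drr genQr]]] := num_field_exists r.
have Sinj_poly (q : {poly rat}) : map_poly QrC (map_poly (in_alg Qr) q) = pQtoC q.
  rewrite -map_poly_comp; apply: eq_map_poly => b.
  by rewrite /= rmorphZ_num rmorph1 mulr1.
exists Qr, QrC, (map_poly (in_alg Qr) p); first split.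
- by apply/polyOverP=> i; rewrite coef_map /= memvZ ?memv_line.
- exists rr => //.
  suff ->: map_poly (in_alg Qr) p = \prod_(z <- rr) ('X - z%:P) by apply: eqpxx.
  apply/(map_poly_inj QrC); rewrite Sinj_poly Dr -Drr big_map rmorph_prod /=.
  by apply: eq_bigr => zz _; rewrite map_polyXsubC.
- move=> x sx.
  have : x \in r.
    rewrite -root_prod_XsubC -Dr Dp.
    rewrite (big_rem x sx) /= rootM root_minCpoly //.
  rewrite -Drr => /mapP[xx _ Dx]; exists xx; split=> //.
  rewrite -(fmorph_root QrC) Sinj_poly Dp -Dx (big_rem x sx) /= rootM.
  by rewrite root_minCpoly.
Qed.

Lemma ext_aut (Qr : fieldExtType rat) (QrC : {rmorphism Qr -> algC}) (pr : {poly Qr})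
  (E : {subfield Qr}) (f : 'End(Qr)) :
  pr \is a polyOver 1%VS -> splittingFieldFor 1 pr fullv -> kHom 1 E f ->
  exists nu : {rmorphism algC -> algC}, forall e, e \in E -> nu (QrC e) = QrC (f e).
Proof.
move=> Qpr spl homf.
have splE : splittingFieldFor E pr fullv.
  by apply: (splittingFieldForS (K := 1%AS)) spl; rewrite ?sub1v ?subvf.
have [g homg Dg] := kHom_extends (sub1v E) homf Qpr splE.
have gm : monoid_morphism g by apply/kHom_monoid_morphism.
pose gmM := GRing.isMonoidMorphism.Build _ _ g gm.
pose gRM : {rmorphism Qr -> Qr} := HB.pack (fun_of_lfun g) gmM.
have [nu Dnu] := extend_algC_subfield_aut QrC gRM.
by exists nu => e Ee; rewrite -Dnu /= Dg.
Qed.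

Lemma polyOver1_rat (Qr : fieldExtType rat) (QrC : {rmorphism Qr -> algC}) (q : {poly Qr}) :
  q \is a polyOver 1%VS -> exists q1 : {poly rat}, map_poly QrC q = pQtoC q1.
Proof.
move=> Qq.
have aP i: q`_i \in 1%VS by apply/polyOverP.
have{aP} a_ i := sig_eqW (vlineP _ _ (aP i)).
exists (\poly_(i < size q) sval (a_ i)).
apply/polyP=> i; rewrite coef_poly coef_map coef_poly /=.
case: ifP => _; rewrite ?rmorph0 //; case: (a_ i) => a /= ->.
by rewrite alg_num_field fmorph_rat.
Qed.

Lemma minCpoly_dvd (x y : algC) (q : {poly rat}) :
  root (minCpoly x) y -> root (pQtoC q) x -> root (pQtoC q) y.
Proof.
have [p [Dp _] minp] := minCpolyP x.
rewrite Dp minp => yr /dvdpP[r ->]; by rewrite rmorphM rootM yr orbT.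
Qed.

Lemma conj_aut (x y : algC) : root (minCpoly x) y ->
  exists nu : {rmorphism algC -> algC}, nu x = y.
Proof.
move=> rxy.
have [Qr [QrC [pr [Qpr spl] ins]]] := split_field_exists [:: x; y].
have [xx [Dx _]] := ins x (mem_head _ _).
have [yy [Dy _]] : exists yy, QrC yy = y /\ root pr yy by apply: ins; rewrite !inE eqxx orbT.
have r1 : root (map_poly \1%VF (minPoly 1 xx)) yy.
  rewrite (@eq_map_poly _ _ _ idfun) => [|z]; last by rewrite /= id_lfunE.
  rewrite map_poly_id //.
  rewrite -(fmorph_root QrC) Dy.
  have [q1 Dq1] := polyOver1_rat QrC (minPolyOver 1 xx).
  rewrite Dq1; apply: minCpoly_dvd rxy _.
  by rewrite -Dq1 -Dx fmorph_root root_minPoly.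
have homf := kHomExtendP (subvv 1%AS) (kHom1 1 1) r1.
have [nu Dnu] := ext_aut QrC Qpr spl homf.
exists nu; rewrite -Dx Dnu ?memv_adjoin //.
by rewrite (kHomExtend_val (K := 1%AS)) ?Dy // kHom1.
Qed.

Lemma fixed_poly (t y : algC) :
  (forall nu : {rmorphism algC -> algC}, nu t = t -> nu y = y) ->
  exists q : {poly rat}, y = (pQtoC q).[t].
Proof.
move=> fix_ty.
have [Qr [QrC [pr [Qpr spl] ins]]] := split_field_exists [:: t; y].
have [tt [Dt _]] := ins t (mem_head _ _).
have [yy [Dy ryy]] : exists yy, QrC yy = y /\ root pr yy.
  by apply: ins; rewrite !inE eqxx orbT.
pose E := <<1; tt>>%AS.
have [Eyy | Eyy] := boolP (yy \in E).
  have Pover := Fadjoin_polyOver 1 tt yy.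
  have [q1 Dq1] := polyOver1_rat QrC Pover.
  exists q1; rewrite -Dq1 -Dt horner_map /= Fadjoin_poly_eq //.
have char0 : has_char0 Qr.
  by move=> n; rewrite pchar_lalg pchar_num.
have sep := pcharf0_separable E char0 yy.
have [rs Dpr _] := spl.
have : minPoly E yy %| \prod_(z <- rs) ('X - z%:P).
  rewrite -(eqp_dvdr _ Dpr); apply: minPoly_dvdp => //.
  by apply: polyOverSv Qpr; apply: sub1v.
case/dvdp_prod_XsubC => m Dm.
have Em : minPoly E yy = \prod_(z <- mask m rs) ('X - z%:P).
  by apply/eqP; rewrite -eqp_monic ?monic_minPoly ?monic_prod_XsubC.
have umr : uniq (mask m rs).
  by rewrite -separable_prod_XsubC -Em.
have yym : yy \in mask m rs by rewrite -root_prod_XsubC -Em root_minPoly.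
have sz : size (mask m rs) != 1%N.
  have := size_minPoly E yy; rewrite Em size_prod_XsubC => [[->]].
  by rewrite adjoin_deg_eq1.
have /hasP[y2 y2m y2ne] : has (fun z => z != yy) (mask m rs).
  apply: contraR sz => /hasPn H.
  rewrite eqn_leq (uniq_leq_size (s2 := [:: yy])) //=.
    by case: (mask m rs) yym.
  by move=> z zm; rewrite inE; have := H z zm; rewrite negbK.
have r1 : root (map_poly \1%VF (minPoly E yy)) y2.
  rewrite (@eq_map_poly _ _ _ idfun) => [|z]; last by rewrite /= id_lfunE.
  by rewrite map_poly_id // Em root_prod_XsubC.
have homf := kHomExtendP (sub1v E) (kHom1 1 E) r1.
have [nu Dnu] := ext_aut QrC Qpr spl homf.
have Ett : tt \in E by rewrite memv_adjoin.
have nut : nu t = t.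
  rewrite -Dt Dnu; last by apply: subvP (subv_adjoin E yy) _ _.
  by rewrite kHomExtend_id // id_lfunE.
have := fix_ty nu nut; rewrite -Dy Dnu ?memv_adjoin //.
rewrite (kHomExtend_val (K := 1%AS)) ?kHom1 //.
by move/fmorph_inj/eqP; rewrite (negPf y2ne).
Qed.

Lemma deriv_neq0_rat (p : {poly rat}) : (1 < size p)%N -> p^`() != 0.
Proof.
case Dn: (size p) => [|[|m]] // _.
have lc : lead_coef p != 0 by rewrite lead_coef_eq0 -size_poly_eq0 Dn.
apply/eqP => /(congr1 (fun q : {poly rat} => q`_m)).
rewrite coef_deriv coef0 => /eqP; rewrite mulrn_eq0 /=.
by rewrite lead_coefE Dn /= in lc; rewrite (negPf lc).
Qed.

Lemma minCpoly_roots (x : algC) : exists r,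
  [/\ minCpoly x = \prod_(z <- r) ('X - z%:P), uniq r &
    forall z, z \in r -> exists nu : {rmorphism algC -> algC}, nu x = z].
Proof.
have [r Dr] := closed_field_poly_normal (minCpoly x).
rewrite (monicP (minCpoly_monic x)) scale1r in Dr.
have conj z : z \in r -> exists nu : {rmorphism algC -> algC}, nu x = z.
  by move=> zr; apply: conj_aut; rewrite Dr root_prod_XsubC.
exists r; split=> //.
rewrite -separable_prod_XsubC -Dr.
have [p [Dp mp] minp] := minCpolyP x.
rewrite Dp separable_map separable_poly.unlock coprimep_def.
apply/negPn/negP => ng.
have /closed_rootP[z] : size (map_poly (ratr : rat -> algC) (gcdp p p^`())) != 1%N.
  by rewrite size_map_poly.
move=> rz.
have rzp : root (minCpoly x) z.
  rewrite Dp; apply: (@root_dvdp _ (pQtoC (gcdp p p^`()))) => //.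
  by rewrite dvdp_map dvdp_gcdl.
have [nu Dnu] := conj_aut rzp.
have [pz [Dpz _] minpz] := minCpolyP z.
have epz : pz = p.
  by apply: (map_poly_inj (ratr : {rmorphism rat -> algC})); rewrite -Dpz -Dp -Dnu minCpoly_aut.
have : p %| p^`().
  rewrite -{1}epz -minpz; apply: (@root_dvdp _ (pQtoC (gcdp p p^`()))) => //.
  by rewrite dvdp_map dvdp_gcdr.
have sp : (1 < size p)%N by rewrite -(size_map_poly (ratr : {rmorphism rat -> algC})) -Dp size_minCpoly.
move/(dvdp_leq (deriv_neq0_rat sp)); rewrite leqNgt lt_size_deriv //.
by rewrite -size_poly_eq0 -lt0n ltnW.
Qed.

Lemma avoid_step (I : finType) (P : pred I) (a b : I -> algC) (N : nat) :
  (#|P| <= N)%N -> (forall i, P i -> a i != 0 \/ b i != 0) ->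
  exists2 c0 : nat, (c0 <= N)%N & forall i, P i -> c0%:R * a i + b i != 0.
Proof.
move=> cP nz.
pose F i : {poly algC} := (a i)%:P * 'X + (b i)%:P.
pose Q := \prod_(i | P i) F i.
have FE i : size (F i) = if (a i == 0) && (b i == 0) then 0%N else (size (a i)%:P).+1.
  by rewrite /F size_MXaddC polyC_eq0.
have Qnz : Q != 0.
  rewrite prodf_seq_neq0; apply/allP => i _; apply/implyP => Pi.
  rewrite -size_poly_eq0 FE; case: (nz i Pi) => /negPf -> //=.
  by rewrite andbF.
have sQ : (size Q <= N.+1)%N.
  apply: leq_trans (size_poly_prod_leq _ _) _.
  suff H : (\sum_(i | P i) size (F i) <= 2 * #|P|)%N.
    rewrite leq_subLR; lia.
  have -> : (2 * #|P| = \sum_(i | P i) 2)%N by rewrite sum_nat_const mulnC.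
  apply: leq_sum => i _; rewrite FE; case: ifP => // _.
  by rewrite ltnS size_polyC leq_b1.
pose cands := [seq (n%:R : algC) | n <- iota 0 N.+1].
have : ~~ all (root Q) cands.
  apply/negP => allr.
  have uc : uniq cands.
    by rewrite map_inj_uniq ?iota_uniq // => m n /eqP; rewrite eqr_nat => /eqP.
  have := max_poly_roots Qnz allr uc.
  by rewrite size_map size_iota ltnNge sQ.
case/allPn => _ /mapP[c0 c0i ->] nr; exists c0.
  by move: c0i; rewrite mem_iota.
move=> i Pi; move: nr; rewrite /root /Q horner_prod prodf_seq_eq0.
apply: contra => ei; apply/hasP; exists i; rewrite ?mem_index_enum //.
by rewrite Pi /F !hornerE mulrC.
Qed.

Lemma avoid (I : finType) (N : nat) m (P : pred I) (v : I -> 'I_m -> algC) :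
  (#|P| <= N)%N -> (forall i, P i -> exists j, v i j != 0) ->
  exists c : 'I_m -> nat, (forall j, c j <= N)%N /\
    forall i, P i -> \sum_(j < m) (c j)%:R * v i j != 0.
Proof.
elim: m P v => [|m IH] P v cP nz.
  exists (fun _ => 0%N); split=> // i Pi.
  by have [[j jlt] _] := nz i Pi.
pose v' i (j : 'I_m) := v i (lift ord0 j).
pose P' := [pred i | P i && [exists j, v' i j != 0]].
have cP' : (#|P'| <= N)%N.
  apply: leq_trans cP; apply: subset_leq_card; apply/subsetP => i.
  by rewrite inE => /andP[].
have [c' [c'N c'nz]] := IH P' v' cP' (fun i => fun H => ltac:(
  case/andP: H => _ /existsP[j Hj]; exact: (ex_intro _ j Hj))).
pose S i := \sum_(j < m) (c' j)%:R * v' i j.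
have nzab : forall i, P i -> v i ord0 != 0 \/ S i != 0.
  move=> i Pi; have [j vj] := nz i Pi.
  have [Ej|nj0] := eqVneq j ord0; first by left; rewrite -Ej.
  right; apply: c'nz; rewrite inE Pi /=; apply/existsP.
  have [j' Dj] : exists j', j = lift ord0 j'.
    by case: (unliftP ord0 j) nj0 => [j' ->|->]; [exists j' | rewrite eqxx].
  by exists j'; rewrite /v' -Dj.
have [c0 c0N c0nz] := avoid_step (a := fun i => v i ord0) (b := S) cP nzab.
exists (fun j => if unlift ord0 j is Some j' then c' j' else c0); split.
  by move=> j; case: (unlift ord0 j).
move=> i Pi; rewrite big_ord_recl unlift_none.
under eq_bigr => j _ do rewrite liftK.
exact: c0nz.
Qed.

Section DC.
Variable F : {pred algC}.
Hypothesis HF : divring_closed F.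
Definition Fd : algC -> bool := fun x => x \in F.
HB.instance Definition _ := GRing.isDivringClosed.Build algC Fd HF.

Lemma Fd_ratr r : ratr r \in Fd.
Proof. by rewrite /ratr rpred_div ?rpred_int. Qed.

Lemma F_horner (q : {poly rat}) t : t \in F -> (pQtoC q).[t] \in F.
Proof.
move=> Ft; have : (pQtoC q).[t] \in Fd; last by [].
apply: rpred_horner => //; apply/polyOverP => i; rewrite coef_map /=.
exact: Fd_ratr.
Qed.

Lemma F_lin m (c : 'I_m -> nat) (g : 'I_m -> algC) :
  (forall j, g j \in F) -> \sum_(j < m) (c j)%:R * g j \in F.
Proof.
move=> Fg; have : \sum_(j < m) (c j)%:R * g j \in Fd; last by [].
by apply: rpred_sum => j _; rewrite rpredM ?rpred_nat //; apply: Fg.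
Qed.
End DC.

Lemma roots_of (n : nat) (c : algC) : (0 < n)%N ->
  {r : seq algC | size r = n & forall w, w ^+ n = c -> w \in r}.
Proof.
move=> n0; have [r Dr] := closed_field_poly_normal ('X^n - c%:P : {poly algC}).
rewrite (monicP (monicXnsubC c n0)) scale1r in Dr.
exists r.
  by have := size_XnsubC c n0; rewrite Dr size_prod_XsubC => [[]].
by move=> w wn; rewrite -root_prod_XsubC -Dr /root !hornerE wn subrr ?eqxx.
Qed.

Unset Implicit Arguments. Set Strict Implicit.
Theorem mainTheorem6 (s k : nat) (a d : 'I_k -> nat) :
  (1 <= s)%N ->
  (k <= s)%N ->
  (forall i, 0 < a i)%N ->
  (forall i, 0 < d i)%N ->
  (forall i j, i != j -> coprime (a i) (a j)) ->
  (forall i, a i <= 2 ^ s)%N ->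
  (forall i, d i <= 2 ^ s)%N ->
  (forall i, minCpoly ((d i).-root (a i)%:R) = 'X^(d i) - ((a i)%:R)%:P) ->
  let D := \big[lcmn/1%N]_(i < k) d i in
  let gens := zeta D :: [seq (d i).-root ((a i)%:R : algC) | i <- enum 'I_k] in
  exists (c0 : int) (c : 'I_k -> int),
    (`|c0| <= 2 ^ (4 * s ^ 2))%N /\ (forall i, `|c i| <= 2 ^ (4 * s ^ 2))%N /\
    let theta := c0%:~R * zeta D
                 + \sum_(i < k) (c i)%:~R * (d i).-root ((a i)%:R : algC) in
    Qgen_eq gens [:: theta] /\ (degQ theta <= 2 ^ (2 * s ^ 2))%N.
Proof.
move=> s1 ks a0 d0 _ abnd dbnd _ D gens.
pose al i := (d i).-root ((a i)%:R : algC).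
pose z := zeta D.
pose g (j : 'I_k.+1) := if unlift ord0 j is Some i then al i else z.
have D0 : (0 < D)%N.
  rewrite /D; elim/big_ind: _ => //.
    by move=> m n m0 n0; rewrite lcmn_gt0 m0.
have zD : z ^+ D = 1.
  by rewrite /z /zeta -exprM mulnC exprM rootCK // sqrrN expr1n.
have alD i : al i ^+ d i = (a i)%:R by rewrite /al rootCK.
have [r0 sr0 r0P] := roots_of 1 D0.
have [ri sri riP] : exists2 ri : 'I_k -> seq algC, (forall i, size (ri i) = d i) &
    (forall i w, w ^+ d i = (a i)%:R -> w \in ri i).
  exists (fun i => s2val (roots_of ((a i)%:R : algC) (d0 i))).
    by move=> i; apply: (s2valP (roots_of _ _)).
  by move=> i; apply: (s2valP' (roots_of _ _)).
pose B := (2 ^ s)%N.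
pose T := ('I_D * {ffun 'I_k -> 'I_B})%type.
pose w (t : T) (j : 'I_k.+1) :=
  if unlift ord0 j is Some i then nth 0 (ri i) (t.2 i) else nth 0 r0 t.1.
have ex_t (nu : {rmorphism algC -> algC}) : exists t : T, forall j, w t j = nu (g j).
  have nz : nu z \in r0 by apply: r0P; rewrite -rmorphXn zD rmorph1.
  have nal i : nu (al i) \in ri i by apply: riP; rewrite -rmorphXn alD rmorph_nat.
  have i0 : (index (nu z) r0 < D)%N by rewrite -sr0 index_mem.
  have ii i : (index (nu (al i)) (ri i) < B)%N.
    by apply: leq_trans (dbnd i); rewrite -sri index_mem.
  exists (Ordinal i0, [ffun i => Ordinal (ii i)]) => j.
  by rewrite /w /g; case: (unlift ord0 j) => [i|] /=; rewrite ?ffunE nth_index.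
pose N := #|{: T}|.
have NB : (N <= 2 ^ (2 * s ^ 2))%N.
  have DB : (D <= B ^ k)%N.
    have Dd : (D %| \prod_(i < k) d i)%N.
      apply/dvdn_biglcmP => i _; rewrite (bigD1 i) //= dvdn_mulr //.
    apply: leq_trans (dvdn_leq _ Dd) _.
      by rewrite prodn_gt0 // => i; apply: d0.
    have -> : (B ^ k = \prod_(i < k) B)%N by rewrite prod_nat_const card_ord.
    by apply: leq_prod => i _; apply: dbnd.
  rewrite /N /T card_prod card_ffun !card_ord.
  apply: leq_trans (leq_mul DB (leqnn _)) _.
  rewrite -expnD /B -expnM leq_exp2l //; nia.
pose P := [pred t : T | [exists j, w t j != g j]].
pose v (t : T) j := w t j - g j.
have vnz : forall t, P t -> exists j, v t j != 0.
  by move=> t /existsP[j Hj]; exists j; rewrite subr_eq0.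
have [c [cN cnz]] := avoid (max_card P) vnz.
pose th := \sum_(j < k.+1) (c j)%:R * g j.
have fixg (nu : {rmorphism algC -> algC}) : nu th = th -> forall j, nu (g j) = g j.
  move=> nuth; have [t Dt] := ex_t nu.
  have : ~~ P t.
    apply/negP => /cnz; apply/negP; rewrite negbK.
    rewrite /v; under eq_bigr => j _ do rewrite mulrBr.
    rewrite sumrB; under eq_bigr => j _ do rewrite Dt.
    by rewrite -/th -nuth rmorph_sum; under [X in _ - X]eq_bigr => j _ do rewrite rmorphM rmorph_nat; rewrite subrr.
  by move/existsPn => H j; rewrite -Dt; apply/eqP; rewrite -[_ == _]negbK H.
exists (c ord0)%:Z, (fun i => (c (lift ord0 i))%:Z).
split; first by rewrite absz_nat (leq_trans (cN _)) // (leq_trans NB) // leq_exp2l //; nia.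
split; first by move=> i; rewrite absz_nat (leq_trans (cN _)) // (leq_trans NB) // leq_exp2l //; nia.
move=> theta.
have Eth : theta = th.
  rewrite /theta /th big_ord_recl /g unlift_none; congr (_ + _).
  by apply: eq_bigr => i _; rewrite liftK.
rewrite Eth; split; last first.
  have [r [Dm ur cj]] := minCpoly_roots th.
  rewrite /degQ Dm size_prod_XsubC /=; apply: leq_trans NB.
  pose val (t : T) := \sum_(j < k.+1) (c j)%:R * w t j.
  have sub : {subset r <= map val (enum {: T})}.
    move=> x xr; have [nu Dx] := cj x xr; have [t Dt] := ex_t nu.
    have -> : x = val t.
      rewrite -Dx /th rmorph_sum; apply: eq_bigr => j _.
      by rewrite rmorphM rmorph_nat Dt.
    by apply: map_f; rewrite mem_enum.
  by rewrite /N cardE -(size_map val); apply: uniq_leq_size.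
have ging j : g j \in gens.
  rewrite /g; case: (unlift ord0 j) => [i|]; last exact: mem_head.
  by rewrite inE; apply/orP; right; apply: map_f; rewrite mem_enum.
have gensg y : y \in gens -> exists j, y = g j.
  rewrite inE => /orP[/eqP ->|/mapP[i _ ->]]; first by exists ord0; rewrite /g unlift_none.
  by exists (lift ord0 i); rewrite /g liftK.
move=> x; split => H F HF sub.
  apply: H => // y /gensg[j ->].
  have [q ->] := fixed_poly (fun nu nuth => fixg nu nuth j).
  by apply: F_horner => //; apply: sub; apply: mem_head.
apply: H => // y; rewrite inE => /eqP ->.
by apply: F_lin => // j; apply: sub.
Qed.
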